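(* For $n\ge1$, $\left| \Pi_n \wr C_2 (1^11^1, 1^11^2, 1^21^1, 1^12^2)\right|=n+1$.
   Context: For $n\ge0$ let $[n]=\{1,\dots,n\}$. A $2$-colored set partition of $[n]$ is a set partition of $[n]$ together with an assignment of a color from $\{1,2\}$ to each element; $\Pi_n\wr C_2$ is the set of these. For a set $S$ of patterns, $\Pi_n\wr C_2(S)$ is the set of such colored partitions avoiding every pattern in $S$ in the pattern sense. For the patterns used here: $\sigma$ contains $1^11^1$ iff two elements in the same block have the same color; $1^11^2$ iff there are $i<j$ in the same block with $i$ colored $1$ and $j$ colored $2$; $1^21^1$ iff there are $i<j$ in the same block with $i$ colored $2$ and $j$ colored $1$; $1^12^2$ iff there are $i<j$ in different blocks with $i$ colored $1$ and $j$ colored $2$. *)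

(* Defs.v *)
From mathcomp Require Import all_boot.
Set Implicit Arguments. Unset Strict Implicit. Unset Printing Implicit Defensive.

(* [n] = {1,...,n} is modelled by 'I_n = {0,...,n-1} (order-preserving shift).
   Colors {1,2} are modelled by bool: false = color 1, true = color 2. *)

Definition col1 : bool := false.
Definition col2 : bool := true.

Definition colored_partition (n : nat) := ({set {set 'I_n}} * {ffun 'I_n -> bool})%type.

Definition is_set_partition n (P : {set {set 'I_n}}) : bool :=
  partition P [set: 'I_n].

Definition same_block n (P : {set {set 'I_n}}) (i j : 'I_n) : bool :=
  [exists B in P, (i \in B) && (j \in B)].

Definition contains_1111 n (s : colored_partition n) : bool :=
  [exists i : 'I_n, exists j : 'I_n,
     [&& i < j, same_block s.1 i j & s.2 i == s.2 j]].

Definition contains_1112 n (s : colored_partition n) : bool :=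
  [exists i : 'I_n, exists j : 'I_n,
     [&& i < j, same_block s.1 i j, s.2 i == col1 & s.2 j == col2]].

Definition contains_1211 n (s : colored_partition n) : bool :=
  [exists i : 'I_n, exists j : 'I_n,
     [&& i < j, same_block s.1 i j, s.2 i == col2 & s.2 j == col1]].

Definition contains_1122 n (s : colored_partition n) : bool :=
  [exists i : 'I_n, exists j : 'I_n,
     [&& i < j, ~~ same_block s.1 i j, s.2 i == col1 & s.2 j == col2]].

Definition avoiders18 n : {set colored_partition n} :=
  [set s : colored_partition n | [&& is_set_partition s.1,
     ~~ contains_1111 s, ~~ contains_1112 s, ~~ contains_1211 s
     & ~~ contains_1122 s]].

(* Main.v *)
Require Import Defs.
From mathcomp Require Import all_boot.
Set Implicit Arguments. Unset Strict Implicit.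

Section S.
Variable n : nat.

Definition S1 : {set {set 'I_n}} := [set [set i] | i in [set: 'I_n]].
Definition cf (k : 'I_n.+1) : {ffun 'I_n -> bool} := [ffun i : 'I_n => i < k].
Definition F (k : 'I_n.+1) : colored_partition n := (S1, cf k).

Lemma S1_part : is_set_partition S1.
Proof.
rewrite /is_set_partition /partition.
have disj : {in mem [set: 'I_n] &, forall i j : 'I_n, j != i -> [disjoint [set i] & [set j]]}.
  move=> i j _ _ ji; rewrite disjoint_sym disjoints1 inE; exact ji.
have n0 : set0 \notin S1.
  apply/imsetP => -[x _ /setP /(_ x)]; rewrite !inE eqxx //.
have [triv _] := trivIimset disj n0.
apply/and3P; split => //.
rewrite cover_imset; apply/eqP/setP => x; rewrite inE.
by apply/bigcupP; exists x => //; rewrite inE.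
Qed.

Lemma S1_same (i j : 'I_n) : i < j -> ~~ same_block S1 i j.
Proof.
move=> ij; apply/existsP => -[B /andP [/imsetP [x _ ->] /andP []]].
rewrite !inE => /eqP ei /eqP ej; by rewrite ei ej ltnn in ij.
Qed.

Lemma F_in k : F k \in avoiders18 n.
Proof.
rewrite inE /= S1_part /=.
apply/and4P; split; apply/negP => /existsP [i /existsP [j]].
- by case/and3P => ij; rewrite (negbTE (S1_same ij)).
- by case/and4P => ij; rewrite (negbTE (S1_same ij)).
- by case/and4P => ij; rewrite (negbTE (S1_same ij)).
- case/and4P => ij _; rewrite /cf !ffunE /col1 /col2 => /eqP Hi /eqP Hj.
  by rewrite (ltn_trans ij Hj) in Hi.
Qed.

Lemma F_inj : injective F.
Proof.
move=> k1 k2 [] /ffunP E; apply/val_inj/eqP; rewrite /= eqn_leq.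
case: (ltngtP k1 k2) => // H.
- have Hn : k1 < n by rewrite -ltnS; apply: leq_trans H (ltn_ord k2).
  by have := E (Ordinal Hn); rewrite !ffunE /= H ltnn.
- have Hn : k2 < n by rewrite -ltnS; apply: leq_trans H (ltn_ord k1).
  by have := E (Ordinal Hn); rewrite !ffunE /= H ltnn.
Qed.

Lemma avoid_sb (s : colored_partition n) (i j : 'I_n) :
  s \in avoiders18 n -> i < j -> ~~ same_block s.1 i j.
Proof.
rewrite inE => /and5P [_ H1 H2 H3 _] ij; apply/negP => sb.
case Ei: (s.2 i); case Ej: (s.2 j).
- by move/negP: H1; apply; apply/existsP; exists i; apply/existsP; exists j; rewrite ij sb Ei Ej.
- by move/negP: H3; apply; apply/existsP; exists i; apply/existsP; exists j; rewrite ij sb Ei Ej.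
- by move/negP: H2; apply; apply/existsP; exists i; apply/existsP; exists j; rewrite ij sb Ei Ej.
- by move/negP: H1; apply; apply/existsP; exists i; apply/existsP; exists j; rewrite ij sb Ei Ej.
Qed.

Lemma avoid_part (s : colored_partition n) : s \in avoiders18 n -> s.1 = S1.
Proof.
move=> sA; have := sA; rewrite inE => /and5P [P _ _ _ _].
move: P; rewrite /is_set_partition /partition => /and3P [/eqP cov triv n0].
have single : forall B, B \in s.1 -> forall x y, x \in B -> y \in B -> x = y.
  move=> B BP x y xB yB; case: (ltngtP x y) => [xy|yx|/val_inj //].
  - by move: (avoid_sb sA xy) => /negP []; apply/existsP; exists B; rewrite BP xB yB.
  - by move: (avoid_sb sA yx) => /negP []; apply/existsP; exists B; rewrite BP xB yB.
apply/setP => B; apply/idP/idP.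
- move=> BP; case: (set_0Vmem B) => [B0|[x xB]]; first by rewrite -B0 BP in n0.
  apply/imsetP; exists x => //; apply/setP => y; rewrite inE.
  apply/idP/eqP => [yB|->//]; exact: single _ BP _ _ yB xB.
- case/imsetP => x _ ->.
  have xc : x \in cover s.1 by rewrite cov inE.
  have PB := pblock_mem xc.
  have xPB : x \in pblock s.1 x by rewrite mem_pblock.
  suff -> : [set x] = pblock s.1 x by [].
  apply/setP => y; rewrite inE; apply/eqP/idP => [->//|yB].
  exact: single _ PB _ _ yB xPB.
Qed.

Lemma avoid_col (s : colored_partition n) : s \in avoiders18 n ->
  exists k, s.2 = cf k.
Proof.
move=> sA; have := sA; rewrite inE => /and5P [_ _ _ _ H4].
have mono : forall i j : 'I_n, i <= j -> s.2 j -> s.2 i.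
  move=> i j; rewrite leq_eqVlt => /orP [/eqP /val_inj -> //|ij] Hj.
  apply/negPn/negP => Hi; move/negP: H4; apply; apply/existsP; exists i;
  apply/existsP; exists j.
  rewrite ij (avoid_sb sA ij) /col1 /col2 Hj eqxx andbT /=; by case: (s.2 i) Hi.
pose P := fun m => (m == n) || [exists i : 'I_n, (val i == m) && ~~ s.2 i].
have exP : exists m, P m by exists n; rewrite /P eqxx.
case: (ex_minnP exP) => m Pm Hmin.
have mn : m <= n.
  apply: Hmin; by rewrite /P eqxx.
exists (Ordinal (mn : m < n.+1)); apply/ffunP => i; rewrite ffunE /=.
case: (ltnP i m) => im.
- apply/negPn/negP => Hi.
  have : m <= i by apply: Hmin; apply/orP; right; apply/existsP; exists i; rewrite eqxx Hi.
  by rewrite leqNgt im.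
- case/orP: Pm => [/eqP mE|/existsP [j /andP [/eqP jm Hj]]].
  + by have := ltn_ord i; rewrite ltnNge; move: im; rewrite mE => ->.
  + apply/negP => Hi; move/negP: Hj; apply; apply: (mono j i) => //; by rewrite jm.
Qed.

Lemma avoidE : avoiders18 n = [set F k | k in [set: 'I_n.+1]].
Proof.
apply/setP => s; apply/idP/imsetP => [sA|[k _ ->]]; last exact: F_in.
have [k Hk] := avoid_col sA.
exists k; first by rewrite inE.
by case: s sA Hk => P c sA /= ->; rewrite /F -(avoid_part sA).
Qed.

End S.

Theorem mainTheorem18 (n : nat) : 1 <= n -> #|avoiders18 n| = n + 1.
Proof.
move=> _; rewrite avoidE card_imset; last exact: F_inj.
by rewrite cardsT card_ord addn1.
Qed.
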